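(* Let $a\in\mathbb{C}$, $b\in\mathbb{C}$, $c\in\mathbb{C}\setminus\{0\}$, and let $S_n(x)\sim\left(\left(\frac{e^t-1}{t}\right)^a,\ \frac{t^2e^{bt}}{e^{ct}-1}\right)$. Then for $n\ge1$, $$S_n(x)=\sum_{l=0}^{n-1}\sum_{j=0}^{n-1-l}\frac{\binom{n-1}{l}}{\binom{l+n}{l}}\binom{n-1-l}{j}S_2(l+n,n)\,c^{n+l}(-nb)^j\,B_{n-l-j}^{(a)}(x).$$
   Context: For invertible $g(t)$ (nonzero constant term) and delta series $f(t)$ ($f(0)=0$, nonzero coefficient of $t$), the Sheffer sequence $S_n(x)\sim(g(t),f(t))$ is the unique polynomial sequence with $\sum_{k\ge0}S_k(y)\frac{t^k}{k!}=\frac{1}{g(\bar f(t))}e^{y\bar f(t)}$ for all $y\in\mathbb{C}$, where $\bar f$ is the compositional inverse of $f$. Complex powers of series with constant term $1$ are defined by $h^a=\exp(a\log h)$. The Bernoulli polynomials of order $a$ are defined by $\left(\frac{t}{e^t-1}\right)^a e^{xt}=\sum_{n\ge0}B_n^{(a)}(x)\frac{t^n}{n!}$. The Stirling numbers of the second kind are defined by $(e^t-1)^n=n!\sum_{k\ge n}S_2(k,n)\frac{t^k}{k!}$. *)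

(* Defs.v *)
(* Formal power series over a field R are represented by their
   coefficient sequences  nat -> R  (coefficient of t^n). *)
From HB Require Import structures.
From mathcomp Require Import all_boot all_order all_algebra.
Set Implicit Arguments. Unset Strict Implicit. Unset Printing Implicit Defensive.
Import Order.TTheory GRing.Theory Num.Theory.
Local Open Scope ring_scope.

Section FPS.
Variable R : fieldType.

Definition fps := nat -> R.

Definition fps_const (c : R) : fps := fun n => if n is 0%N then c else 0.
Definition fps_X : fps := fun n => if n == 1%N then 1 else 0.
Definition fps_add (f g : fps) : fps := fun n => f n + g n.
Definition fps_sub (f g : fps) : fps := fun n => f n - g n.
Definition fps_scale (c : R) (f : fps) : fps := fun n => c * f n.
Definition fps_mul (f g : fps) : fps :=
  fun n => \sum_(i < n.+1) f i * g (n - i)%N.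
Definition fps_expn (f : fps) (k : nat) : fps := iter k (fps_mul f) (fps_const 1).
(* composition f(g(t)), meaningful when g 0 = 0 *)
Definition fps_comp (f g : fps) : fps :=
  fun n => \sum_(k < n.+1) f k * fps_expn g k n.
Definition fps_mulX (f : fps) : fps := fun n => if n is k.+1 then f k else 0.
Definition fps_divX (f : fps) : fps := fun n => f n.+1.

Definition fps_expS (c : R) : fps := fun n => c ^+ n / (n`!)%:R.
(* exp(h) for h(0) = 0 *)
Definition fps_exp (h : fps) : fps := fps_comp (fps_expS 1) h.
(* log(1+u) = sum_{k>=1} (-1)^{k+1} u^k / k *)
Definition fps_logS : fps :=
  fun k => if k is 0%N then 0 else (-1) ^+ k.+1 / k%:R.
(* log(h) for h(0) = 1 *)
Definition fps_log (h : fps) : fps := fps_comp fps_logS (fps_sub h (fps_const 1)).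
(* h^a := exp(a log h), for h(0) = 1 *)
Definition fps_pow (h : fps) (a : R) : fps := fps_exp (fps_scale a (fps_log h)).
(* multiplicative inverse 1/h for h(0) != 0, via the geometric series:
   1/h = h0^{-1} * sum_k (1 - h/h0)^k *)
Definition fps_inv (h : fps) : fps :=
  fps_scale (h 0%N)^-1
    (fps_comp (fun _ => 1) (fps_sub (fps_const 1) (fps_scale (h 0%N)^-1 h))).

(* Sheffer sequence S ~ (g, f): there is the compositional inverse fb of f
   (fb(0) = 0, f(fb(t)) = t) and for all y,
   sum_k S_k(y) t^k / k! = (1 / g(fb(t))) * e^{y fb(t)}. *)
Definition is_sheffer (g f : fps) (S : nat -> {poly R}) : Prop :=
  exists fb : fps,
    fb 0%N = 0 /\ (forall n, fps_comp f fb n = fps_X n) /\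
    forall (y : R) (n : nat),
      (S n).[y] / (n`!)%:R = fps_mul (fps_inv (fps_comp g fb)) (fps_exp (fps_scale y fb)) n.

Definition fps_eT : fps := fps_divX (fps_sub (fps_expS 1) (fps_const 1)).

(* Bernoulli polynomials of order a:  (t/(e^t-1))^a e^{xt} = sum B_n^{(a)}(x) t^n/n! *)
Definition bernoulli_ord (a x : R) (n : nat) : R :=
  (n`!)%:R * fps_mul (fps_pow (fps_inv fps_eT) a) (fps_exp (fps_scale x fps_X)) n.

(* Stirling numbers of the second kind: (e^t-1)^n = n! sum_k S2(k,n) t^k/k! *)
Definition stirling2 (k n : nat) : R :=
  (k`!)%:R / (n`!)%:R * fps_expn (fps_sub (fps_expS 1) (fps_const 1)) n k.

End FPS.

(* Main.v *)
Require Import Defs.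
From HB Require Import structures.
From mathcomp Require Import all_boot all_order all_algebra.
From mathcomp Require Import boolp.
From mathcomp Require Import ring zify.
From Stdlib Require Import FunctionalExtensionality.
Set Implicit Arguments. Unset Strict Implicit. Unset Printing Implicit Defensive.
Import Order.TTheory GRing.Theory Num.Theory.
Local Open Scope ring_scope.


HB.instance Definition _ (R : numFieldType) := gen_eqMixin (fps R).
HB.instance Definition _ (R : numFieldType) := gen_choiceMixin (fps R).

Section Add.
Variable R : numFieldType.
Local Notation F := (fps R).
Definition fopp (f : F) : F := fun n => - f n.
Lemma faddA : associative (@fps_add R).
Proof. move=> f g h; apply: functional_extensionality => n; by rewrite /fps_add addrA. Qed.
Lemma faddC : commutative (@fps_add R).
Proof. move=> f g; apply: functional_extensionality => n; by rewrite /fps_add addrC. Qed.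
Lemma fadd0 : left_id (fps_const 0) (@fps_add R).
Proof. move=> f; apply: functional_extensionality => n; rewrite /fps_add /fps_const; by case: n => [|n]; rewrite add0r. Qed.
Lemma faddN : left_inverse (fps_const 0) fopp (@fps_add R).
Proof. move=> f; apply: functional_extensionality => n; rewrite /fps_add /fps_const /fopp; by case: n => [|n]; rewrite addNr. Qed.
End Add.

HB.instance Definition _ (R : numFieldType) :=
  GRing.isZmodule.Build (fps R) (@faddA R) (@faddC R) (@fadd0 R) (@faddN R).

Section Transfer.
Variable R : numFieldType.
Local Notation F := (fps R).

Definition agree (n : nat) (f : F) (P : {poly R}) := forall i, (i <= n)%N -> f i = P`_i.
Definition tr (n : nat) (f : F) : {poly R} := \poly_(i < n.+1) f i.

Lemma agree_tr n f : agree n f (tr n f).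
Proof. by move=> i hi; rewrite coef_poly ltnS hi. Qed.

Lemma agree_le n m f P : (m <= n)%N -> agree n f P -> agree m f P.
Proof. by move=> hmn h i hi; apply: h; apply: leq_trans hmn. Qed.

Lemma eq_agree (f g : F) : (forall n, exists P, agree n f P /\ agree n g P) -> f = g.
Proof.
move=> h; apply: functional_extensionality => n; have [P [h1 h2]] := h n.
by rewrite h1 // h2.
Qed.

Lemma agree_mul n f g P Q : agree n f P -> agree n g Q -> agree n (fps_mul f g) (P * Q).
Proof.
move=> hf hg i hi; rewrite coefM /fps_mul; apply: eq_bigr => j _.
have hj : (j <= n)%N by apply: leq_trans hi; rewrite -ltnS.
rewrite hf // hg //; apply: leq_trans hi; exact: leq_subr.
Qed.

Lemma agree_add n f g P Q : agree n f P -> agree n g Q -> agree n (f + g) (P + Q).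
Proof. by move=> hf hg i hi; rewrite coefD -hf // -hg. Qed.

Lemma agree_opp n f P : agree n f P -> agree n (- f) (- P).
Proof. by move=> hf i hi; rewrite coefN -hf. Qed.

Lemma agree_const n c : agree n (fps_const c) c%:P.
Proof. by move=> [|i] hi; rewrite coefC. Qed.

Lemma agree_X n : agree n (@fps_X R) 'X.
Proof. by move=> i hi; rewrite coefX /fps_X; case: (i == 1)%N. Qed.

End Transfer.

Section Ring.
Variable R : numFieldType.
Local Notation F := (fps R).

Lemma fmulA : associative (@fps_mul R).
Proof.
move=> f g h; apply: eq_agree => n.
exists (tr n f * (tr n g * tr n h)).
split.
  by apply: agree_mul; [|apply: agree_mul]; apply: agree_tr.
by rewrite mulrA; apply: agree_mul; [apply: agree_mul|]; apply: agree_tr.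
Qed.
Lemma fmulC : commutative (@fps_mul R).
Proof.
move=> f g; apply: eq_agree => n; exists (tr n f * tr n g); split.
  by apply: agree_mul; apply: agree_tr.
by rewrite mulrC; apply: agree_mul; apply: agree_tr.
Qed.
Lemma fmul1 : left_id (fps_const 1) (@fps_mul R).
Proof.
move=> f; apply: eq_agree => n; exists (1%:P * tr n f); split.
  by apply: agree_mul; [apply: agree_const | apply: agree_tr].
by rewrite mul1r; apply: agree_tr.
Qed.
Lemma fmulDl : left_distributive (@fps_mul R) (@fps_add R).
Proof.
move=> f g h; apply: eq_agree => n; exists ((tr n f + tr n g) * tr n h); split.
  by apply: agree_mul; [apply: agree_add|]; apply: agree_tr.
by rewrite mulrDl; apply: agree_add; apply: agree_mul; apply: agree_tr.
Qed.
Lemma fone0 : (fps_const 1 : F) != fps_const 0.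
Proof. apply/eqP => /(congr1 (fun f : F => f 0%N)) /= /eqP; by rewrite oner_eq0. Qed.
End Ring.

HB.instance Definition _ (R : numFieldType) :=
  GRing.Zmodule_isComNzRing.Build (fps R) (@fmulA R) (@fmulC R) (@fmul1 R) (@fmulDl R) (@fone0 R).




Section Basic.
Variable R : numFieldType.
Local Notation F := (fps R).

Lemma mulE (f g : F) : fps_mul f g = f * g. Proof. by []. Qed.
Lemma addE (f g : F) : fps_add f g = f + g. Proof. by []. Qed.
Lemma subE (f g : F) : fps_sub f g = f - g. Proof. by []. Qed.
Lemma oneE : fps_const 1 = 1 :> F. Proof. by []. Qed.
Lemma zeroE : fps_const 0 = 0 :> F. Proof. by []. Qed.
Lemma fexpnE (f : F) k : fps_expn f k = f ^+ k.
Proof. elim: k => [|k IH] //=; by rewrite /fps_expn /= -/(fps_expn f k) IH exprS. Qed.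

Lemma fcoefD (f g : F) n : (f + g) n = f n + g n. Proof. by []. Qed.
Lemma fcoefN (f : F) n : (- f) n = - f n. Proof. by []. Qed.
Lemma fcoefB (f g : F) n : (f - g) n = f n - g n. Proof. by []. Qed.
Lemma fcoefM (f g : F) n : (f * g) n = \sum_(i < n.+1) f i * g (n - i)%N. Proof. by []. Qed.
Lemma fcoef0 n : (0 : F) n = 0. Proof. by case: n. Qed.
Lemma fcoef1 n : (1 : F) n = (n == 0%N)%:R. Proof. by case: n. Qed.
Lemma fcoefC c n : fps_const c n = if n is 0%N then c else 0 :> R. Proof. by []. Qed.

Lemma fcoefCM c (f : F) n : (fps_const c * f) n = c * f n.
Proof.
rewrite fcoefM big_ord_recl /= subn0 big1 ?addr0 // => i _.
by rewrite /fps_const /= mul0r.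
Qed.
Lemma scaleE c (f : F) : fps_scale c f = fps_const c * f.
Proof. by apply: functional_extensionality => n; rewrite fcoefCM. Qed.

Lemma constM a b : fps_const (a * b) = fps_const a * fps_const b :> F.
Proof. apply: functional_extensionality => n; rewrite fcoefCM; by case: n => [|n]; rewrite /= ?mulr0. Qed.
Lemma constD a b : fps_const (a + b) = fps_const a + fps_const b :> F.
Proof. apply: functional_extensionality => n; by case: n => [|n]; rewrite fcoefD /= ?addr0. Qed.
Lemma constN a : fps_const (- a) = - fps_const a :> F.
Proof. apply: functional_extensionality => n; by case: n => [|n]; rewrite fcoefN /= ?oppr0. Qed.
Lemma constX a k : fps_const (a ^+ k) = fps_const a ^+ k :> F.
Proof. elim: k => [|k IH]; first by rewrite expr0. by rewrite exprS constM IH -exprS. Qed.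

Lemma agree_exp n (f : F) P k : agree n f P -> agree n (f ^+ k) (P ^+ k).
Proof.
move=> h; elim: k => [|k IH]; first by rewrite !expr0; apply: agree_const.
by rewrite !exprS; apply: agree_mul.
Qed.

Lemma exp_val (f : F) k i : f 0%N = 0 -> (i < k)%N -> (f ^+ k) i = 0.
Proof.
move=> f0; elim: k i => [|k IH] i //= hi.
rewrite exprS fcoefM big1 // => [[j hj]] _ /=.
case: j hj => [|j] hj; first by rewrite f0 mul0r.
by rewrite IH ?mulr0 //; lia.
Qed.

Lemma agree_trS n (f : F) : agree n f (tr n.+1 f).
Proof. by move=> i hi; rewrite coef_poly ltnS (leq_trans hi (leqnSn n)). Qed.

Definition pf (P : {poly R}) : F := fun i => P`_i.
Lemma agree_pf n P : agree n (pf P) P. Proof. by []. Qed.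

Lemma pexp_val (U : {poly R}) k i : U`_0 = 0 -> (i < k)%N -> (U ^+ k)`_i = 0.
Proof.
move=> U0 hi; have := agree_exp k (@agree_pf i U); move/(_ i (leqnn i)) => <-.
exact: exp_val.
Qed.

Lemma sum_widen (G : nat -> R) a b : (a <= b)%N ->
  (forall k, (a <= k)%N -> (k < b)%N -> G k = 0) -> \sum_(k < a) G k = \sum_(k < b) G k.
Proof.
move=> hab H; rewrite -!(big_mkord xpredT) [RHS](@big_cat_nat _ _ _ a 0 b _ _ (leq0n a) hab) /=.
rewrite [X in _ = _ + X]big_nat_cond [X in _ = _ + X]big1 ?addr0 // => k /andP [/andP[h1 h2] _]; exact: H.
Qed.

Lemma agree_comp n (f u : F) P U : agree n f P -> agree n u U -> u 0%N = 0 ->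
  agree n (fps_comp f u) (P \Po U).
Proof.
move=> hf hu u0 i hi; rewrite coef_comp_poly /fps_comp.
have U0 : U`_0 = 0 by rewrite -hu.
have -> : \sum_(k < i.+1) f k * fps_expn u k i = \sum_(k < i.+1) P`_k * (U ^+ k)`_i.
  apply: eq_bigr => [[k hk]] _ /=; rewrite fexpnE hf; last by apply: leq_trans hi.
  by rewrite (agree_exp k hu).
rewrite (@sum_widen (fun k => P`_k * (U ^+ k)`_i) _ (maxn i.+1 (size P))) ?leq_maxl //; last first.
  by move=> k hk _; rewrite pexp_val ?mulr0.
rewrite [RHS](@sum_widen (fun k => P`_k * (U ^+ k)`_i) _ (maxn i.+1 (size P))) ?leq_maxr //.
by move=> k hk _; rewrite nth_default ?mul0r.
Qed.

Lemma comp_coef0 (f u : F) : fps_comp f u 0%N = f 0%N.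
Proof. by rewrite /fps_comp big_ord1 /= mulr1. Qed.

Lemma compM (f g u : F) : u 0%N = 0 -> fps_comp (f * g) u = fps_comp f u * fps_comp g u.
Proof.
move=> u0; apply: eq_agree => n.
exists ((tr n f \Po tr n u) * (tr n g \Po tr n u)); split.
  rewrite -comp_polyM; apply: agree_comp => //; last exact: agree_tr.
  by apply: agree_mul; apply: agree_tr.
by apply: agree_mul; apply: agree_comp => //; apply: agree_tr.
Qed.

Lemma compD (f g u : F) : u 0%N = 0 -> fps_comp (f + g) u = fps_comp f u + fps_comp g u.
Proof.
move=> u0; apply: eq_agree => n.
exists ((tr n f \Po tr n u) + (tr n g \Po tr n u)); split.
  rewrite -comp_polyD; apply: agree_comp => //; last exact: agree_tr.
  by apply: agree_add; apply: agree_tr.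
by apply: agree_add; apply: agree_comp => //; apply: agree_tr.
Qed.

Lemma compC c (u : F) : u 0%N = 0 -> fps_comp (fps_const c) u = fps_const c.
Proof.
move=> u0; apply: eq_agree => n; exists (c%:P \Po tr n u); split.
  by apply: agree_comp => //; [apply: agree_const | apply: agree_tr].
by rewrite comp_polyC; apply: agree_const.
Qed.

Lemma comp1 (u : F) : u 0%N = 0 -> fps_comp 1 u = 1.
Proof. exact: compC. Qed.

Lemma compX (u : F) : u 0%N = 0 -> fps_comp (@fps_X R) u = u.
Proof.
move=> u0; apply: eq_agree => n; exists ('X \Po tr n u); split.
  by apply: agree_comp => //; [apply: agree_X | apply: agree_tr].
by rewrite comp_polyX; apply: agree_tr.
Qed.

Lemma compN (f u : F) : u 0%N = 0 -> fps_comp (- f) u = - fps_comp f u.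
Proof.
move=> u0; have := compD f (- f) u0; rewrite subrr.
have -> : fps_comp 0 u = 0 by rewrite -zeroE compC.
by move=> h; apply/eqP; rewrite -addr_eq0 addrC -h.
Qed.

Lemma compB (f g u : F) : u 0%N = 0 -> fps_comp (f - g) u = fps_comp f u - fps_comp g u.
Proof. by move=> u0; rewrite compD // compN. Qed.

Lemma compXn (f u : F) k : u 0%N = 0 -> fps_comp (f ^+ k) u = fps_comp f u ^+ k.
Proof.
move=> u0; elim: k => [|k IH]; first by rewrite !expr0 comp1.
by rewrite !exprS compM // IH.
Qed.

Lemma compCM c (f u : F) : u 0%N = 0 -> fps_comp (fps_const c * f) u = fps_const c * fps_comp f u.
Proof. by move=> u0; rewrite compM // compC. Qed.

Definition fD (f : F) : F := fun n => f n.+1 *+ n.+1.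

Lemma agree_D n f P : agree n.+1 f P -> agree n (fD f) P^`().
Proof. by move=> h i hi; rewrite coef_deriv /fD h. Qed.

Lemma fD_add (f g : F) : fD (f + g) = fD f + fD g.
Proof. apply: functional_extensionality => n; by rewrite /fD fcoefD mulrnDl. Qed.
Lemma fD_opp (f : F) : fD (- f) = - fD f.
Proof. apply: functional_extensionality => n; by rewrite /fD fcoefN mulNrn. Qed.
Lemma fD_sub (f g : F) : fD (f - g) = fD f - fD g.
Proof. by rewrite fD_add fD_opp. Qed.
Lemma fD_const c : fD (fps_const c) = 0.
Proof. apply: functional_extensionality => n; by rewrite /fD /= mul0rn fcoef0. Qed.
Lemma fD_CM c (f : F) : fD (fps_const c * f) = fps_const c * fD f.
Proof. apply: functional_extensionality => n; by rewrite /fD !fcoefCM mulrnAr. Qed.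

Lemma fD_mul (f g : F) : fD (f * g) = fD f * g + f * fD g.
Proof.
apply: eq_agree => n; exists ((tr n.+1 f * tr n.+1 g)^`()); split.
  by apply: agree_D; apply: agree_mul; apply: agree_tr.
rewrite derivM; apply: agree_add; apply: agree_mul.
- by apply: agree_D; apply: agree_tr.
- exact: agree_trS.
- exact: agree_trS.
- by apply: agree_D; apply: agree_tr.
Qed.

Lemma fD_exp (f : F) k : fD (f ^+ k.+1) = fps_const (k.+1)%:R * f ^+ k * fD f.
Proof.
elim: k => [|k IH]; first by rewrite expr1 expr0 mulr1 oneE mul1r.
rewrite exprS fD_mul IH [in RHS]mulrS constD oneE exprS; ring.
Qed.

Lemma fD_comp (f u : F) : u 0%N = 0 -> fD (fps_comp f u) = fps_comp (fD f) u * fD u.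
Proof.
move=> u0; apply: eq_agree => n; exists ((tr n.+1 f \Po tr n.+1 u)^`()); split.
  by apply: agree_D; apply: agree_comp => //; apply: agree_tr.
rewrite deriv_comp; apply: agree_mul; last by apply: agree_D; apply: agree_tr.
apply: agree_comp => //; last exact: agree_trS.
by apply: agree_D; apply: agree_tr.
Qed.

Lemma fD_X : fD (@fps_X R) = 1.
Proof. apply: functional_extensionality => [[|n]]; by rewrite /fD fcoef1 /fps_X /= ?mul0rn. Qed.

Lemma fD_eq0 (f : F) : fD f = 0 -> f = fps_const (f 0%N).
Proof.
move=> h; apply: functional_extensionality => [[|n]] //=.
have := congr1 (fun g : F => g n) h; rewrite /fD fcoef0 => /eqP.
by rewrite mulrn_eq0 /= => /eqP.
Qed.

End Basic.


Section Inv.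
Variable R : numFieldType.
Local Notation F := (fps R).

Lemma coefM0 (f g : F) : (f * g) 0%N = f 0%N * g 0%N.
Proof. by rewrite fcoefM big_ord1. Qed.

Definition geom : F := fun _ => 1.

Lemma geomE : (1 - @fps_X R) * geom = 1.
Proof.
apply: functional_extensionality => [[|n]].
  by rewrite coefM0 fcoefB fcoef1 /fps_X /geom /= subr0 mulr1.
rewrite fcoefM big_ord_recl big_ord_recl big1 /=.
  by rewrite /geom fcoef1 !fcoefB !fcoef1 /fps_X /= !mulr1 subr0 sub0r addr0 subrr.
move=> i _; by rewrite fcoefB fcoef1 /fps_X /= subrr mul0r.
Qed.

Lemma finv_mul (h : F) : h 0%N != 0 -> fps_inv h * h = 1.
Proof.
move=> h0; rewrite /fps_inv scaleE subE.
set v := (1 - fps_scale _ h).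
have v0 : v 0%N = 0 by rewrite /v fcoefB fcoef1 /fps_scale /= mulVf // subrr.
have := congr1 (fun g => fps_comp g v) geomE; rewrite compM // compB // comp1 // compX // -/geom.
have -> : 1 - v = fps_const (h 0%N)^-1 * h by rewrite /v scaleE; ring.
move=> H; rewrite -[RHS]H; ring.
Qed.

Definition funit : {pred F} := fun h => h 0%N != 0.
Definition finv (h : F) : F := if h 0%N != 0 then fps_inv h else h.

Lemma fmulVx : {in funit, left_inverse 1 finv *%R}.
Proof. move=> h hu; have h0 : h 0%N != 0 by exact: hu. by rewrite /finv h0 finv_mul. Qed.
Lemma funitPl (x y : F) : y * x = 1 -> funit x.
Proof.
move=> /(congr1 (fun f : F => f 0%N)); rewrite coefM0 fcoef1 /= => H.
rewrite /funit; apply/eqP => x0; move: H; rewrite x0 mulr0 => /eqP; by rewrite eq_sym oner_eq0.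
Qed.
Lemma finv_out : {in [predC funit], finv =1 id}.
Proof. move=> h hn; have : ~~ (h 0%N != 0) by exact: hn. by rewrite /finv => /negbTE ->. Qed.

End Inv.

HB.instance Definition _ (R : numFieldType) :=
  GRing.ComNzRing_hasMulInverse.Build (fps R) (@fmulVx R) (@funitPl R) (@finv_out R).

Section Exp.
Variable R : numFieldType.
Local Notation F := (fps R).

Lemma unitE (h : F) : (h \is a GRing.unit) = (h 0%N != 0).
Proof. by []. Qed.

Lemma invE (h : F) : h 0%N != 0 -> fps_inv h = h^-1.
Proof. by move=> h0; rewrite /GRing.inv /= /finv h0. Qed.

Lemma inv_uniq (x y : F) : x * y = 1 -> y \is a GRing.unit -> x = y^-1.
Proof. by move=> h yu; rewrite -[x]mulr1 -(mulrV yu) mulrA h mul1r. Qed.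

Lemma coefV0 (h : F) : h 0%N != 0 -> h^-1 0%N = (h 0%N)^-1.
Proof.
move=> h0; have := mulVr (h0 : h \is a GRing.unit).
move/(congr1 (fun f : F => f 0%N)); rewrite coefM0 fcoef1 /= => H.
by rewrite -[LHS]mulr1 -(mulfV h0) mulrA H mul1r.
Qed.

Lemma compV (g u : F) : u 0%N = 0 -> g 0%N != 0 -> fps_comp g^-1 u = (fps_comp g u)^-1.
Proof.
move=> u0 g0; apply: inv_uniq; last by rewrite unitE comp_coef0.
by rewrite -compM // mulVr // comp1.
Qed.

Lemma fD_inv (h : F) : h 0%N != 0 -> fD h^-1 = - (h^-1 ^+ 2) * fD h.
Proof.
move=> h0; have hu : h \is a GRing.unit by [].
have := congr1 (@fD R) (mulrV hu); rewrite fD_mul -oneE fD_const => H.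
have : h * fD h^-1 = - fD h * h^-1 by apply/eqP; rewrite -subr_eq0 mulNr opprK addrC H.
move/(congr1 (fun g => h^-1 * g)); rewrite mulrA mulVr // mul1r => ->.
rewrite expr2; ring.
Qed.

Lemma expS_coef0 c : fps_expS c 0%N = 1 :> R.
Proof. by rewrite /fps_expS expr0 fact0 divr1. Qed.

Lemma fact_neq0 n : (n`!)%:R != 0 :> R.
Proof. by rewrite pnatr_eq0 -lt0n fact_gt0. Qed.

Lemma fD_expS c : fD (fps_expS c) = fps_const c * fps_expS c :> F.
Proof.
apply: functional_extensionality => n; rewrite /fD fcoefCM /fps_expS exprS factS natrM -mulr_natr.
have h1 := fact_neq0 n; have h2 : (n.+1)%:R != 0 :> R by rewrite pnatr_eq0.
field; by rewrite h1 addrC natr1 h2.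
Qed.

Lemma exp_coef0 (h : F) : fps_exp h 0%N = 1.
Proof. by rewrite /fps_exp comp_coef0 expS_coef0. Qed.

Lemma fD_fexp (h : F) : h 0%N = 0 -> fD (fps_exp h) = fps_exp h * fD h.
Proof. by move=> h0; rewrite /fps_exp fD_comp // fD_expS oneE mul1r. Qed.

Lemma expN (h : F) : h 0%N = 0 -> fps_exp (- h) = (fps_exp h)^-1.
Proof.
move=> h0; have hN : (- h) 0%N = 0 by rewrite fcoefN h0 oppr0.
apply: inv_uniq; last by rewrite unitE exp_coef0 oner_eq0.
have := fD_eq0 (f := fps_exp (- h) * fps_exp h).
rewrite fD_mul !fD_fexp // fD_opp coefM0 !exp_coef0 mulr1 oneE => -> //; ring.
Qed.

Definition altS : F := fun n => (-1) ^+ n.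

Lemma fD_logS : fD (@fps_logS R) = altS.
Proof.
apply: functional_extensionality => n; rewrite /fD /fps_logS /altS -mulr_natr.
have h2 : (n.+1)%:R != 0 :> R by rewrite pnatr_eq0.
rewrite -mulr_natr !exprS; field; by rewrite addrC natr1.
Qed.

Lemma altSE : (1 + @fps_X R) * altS = 1.
Proof.
apply: functional_extensionality => [[|n]].
  by rewrite coefM0 fcoefD fcoef1 /fps_X /altS /= addr0 mulr1.
rewrite fcoefM big_ord_recl big_ord_recl big1 /=.
  rewrite /altS fcoef1 !fcoefD !fcoef1 /fps_X /bump /= addr0 add0r !mul1r subn0 addr0 subSS subn0.
  by rewrite exprS mulN1r addrC subrr.
move=> i _; by rewrite fcoefD fcoef1 /fps_X /= addr0 mul0r.
Qed.

Lemma log_coef0 (h : F) : fps_log h 0%N = 0.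
Proof. by rewrite /fps_log comp_coef0. Qed.

Lemma fD_log (h : F) : h 0%N = 1 -> fD (fps_log h) = h^-1 * fD h.
Proof.
move=> h1; have v0 : (h - 1) 0%N = 0 by rewrite fcoefB h1 fcoef1 subrr.
have hu : h 0%N != 0 by rewrite h1 oner_eq0.
rewrite /fps_log subE oneE fD_comp // fD_logS fD_sub -oneE fD_const subr0; congr (_ * _).
apply: inv_uniq => //; have := congr1 (fun g => fps_comp g (h - 1)) altSE.
by rewrite compM // compD // comp1 // compX // => H; rewrite -[RHS]H; ring.
Qed.

Lemma logV (h : F) : h 0%N = 1 -> fps_log h^-1 = - fps_log h.
Proof.
move=> h1; have hu : h 0%N != 0 by rewrite h1 oner_eq0.
have hv1 : h^-1 0%N = 1 by rewrite coefV0 // h1 invr1.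
apply/eqP; rewrite -addr_eq0; apply/eqP.
rewrite (fD_eq0 (f := fps_log h^-1 + fps_log h)).
  by rewrite fcoefD !log_coef0 addr0 zeroE.
rewrite fD_add !fD_log // fD_inv // invrK expr2.
have hU : h \is a GRing.unit by [].
rewrite mulrA mulrN mulrA mulrV // mul1r; ring.
Qed.

Lemma powV (h : F) a : h 0%N = 1 -> fps_pow h^-1 a = (fps_pow h a)^-1.
Proof.
move=> h1; rewrite /fps_pow !scaleE logV // mulrN expN //.
by rewrite fcoefCM log_coef0 mulr0.
Qed.

Lemma pow_coef0 (h : F) a : fps_pow h a 0%N = 1.
Proof. exact: exp_coef0. Qed.

End Exp.


Section Lag.
Variable R : numFieldType.
Local Notation F := (fps R).
Local Notation X := (@fps_X R).

Lemma fXM (g : F) : X * g = fps_mulX g.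
Proof.
apply: functional_extensionality => [[|n]].
  by rewrite coefM0 /fps_X /= mul0r.
rewrite fcoefM big_ord_recl big_ord_recl big1 /=.
  by rewrite /fps_X /bump /= mul0r add0r mul1r addr0 subSS subn0.
by move=> i _; rewrite /fps_X /bump /=; case: i => [i hi] /=; rewrite mul0r.
Qed.

Lemma fXnM (g : F) m i : (X ^+ m * g) (i + m)%N = g i.
Proof.
elim: m g i => [|m IH] g i; first by rewrite expr0 mul1r addn0.
by rewrite exprSr -mulrA addnS -addSn IH fXM.
Qed.

Lemma fXnM_low (g : F) m i : (i < m)%N -> (X ^+ m * g) i = 0.
Proof.
elim: m i g => [|m IH] i g //= hi.
rewrite exprS -mulrA fXM; case: i hi => [|i] hi; first by [].
by rewrite /fps_mulX IH.
Qed.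

Lemma X_inj (f g : F) : X * f = X * g -> f = g.
Proof.
move=> h; apply: functional_extensionality => n.
by have := congr1 (fun k : F => k n.+1) h; rewrite !fXM.
Qed.

Lemma mulX_divX (h : F) : h 0%N = 0 -> X * fps_divX h = h.
Proof. move=> h0; rewrite fXM; apply: functional_extensionality => [[|n]] //. Qed.

Lemma fcoef_sum (I : Type) (r : seq I) (P : pred I) (G : I -> F) j :
  (\sum_(m <- r | P m) G m) j = \sum_(m <- r | P m) G m j.
Proof.
elim/big_rec2: _ => [|m a b _ <-]; [exact: fcoef0 | by []].
Qed.

Lemma mul_low (A f g : F) n : (forall j, (j <= n)%N -> f j = g j) -> (A * f) n = (A * g) n.
Proof.
move=> h; rewrite !fcoefM; apply: eq_bigr => [[i hi]] _ /=; rewrite h //; lia.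
Qed.

Lemma fDE (g : F) n : fD g n = g n.+1 *+ n.+1. Proof. by []. Qed.

Lemma cov_term (w : F) J : w 0%N != 0 -> (0 < J)%N ->
  ((w^-1) ^+ J * fD (X * w)) J.-1 = (J == 1%N)%:R.
Proof.
move=> w0 hJ; have wu : w \is a GRing.unit by [].
rewrite fD_mul fD_X mul1r.
case: J hJ => [|J] // _ /=.
have -> : w^-1 ^+ J.+1 * (w + X * fD w) = w^-1 ^+ J + X * (w^-1 ^+ J.+1 * fD w).
  rewrite exprSr mulrDr -(mulrA _ w^-1 w) mulVr // mulr1; congr (_ + _); ring.
case: J => [|J] /=.
  by rewrite fcoefD expr0 fcoef1 fXM /= addr0.
rewrite fcoefD fXM /=.
have : fD (w^-1 ^+ J.+1) = - fps_const (J.+1)%:R * (w^-1 ^+ J.+2 * fD w).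
  by rewrite fD_exp fD_inv // expr2 !exprS; ring.
move/(congr1 (fun k : F => k J)); rewrite fDE -constN fcoefCM => H.
have hJ : (J.+1)%:R != 0 :> R by rewrite pnatr_eq0.
have -> : (w^-1 ^+ J.+2 * fD w) J = - (w^-1 ^+ J.+1) J.+1 by
  apply: (mulfI hJ); by rewrite mulrN [in RHS]mulr_natl H mulNr opprK.
by rewrite subrr.
Qed.

Lemma cov (w Q : F) K : w 0%N != 0 -> (0 < K)%N ->
  ((w^-1) ^+ K * fps_comp Q (X * w) * fD (X * w)) K.-1 = Q K.-1.
Proof.
move=> w0 hK; set u := X * w.
have u0 : u 0%N = 0 by rewrite /u fXM.
rewrite mulrAC.
rewrite (@mul_low _ _ (\sum_(m < K) fps_const (Q m) * u ^+ m)); last first.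
  move=> j hj; rewrite fcoef_sum /fps_comp.
  under [RHS]eq_bigr do rewrite fcoefCM.
  rewrite (eq_bigr (fun k : 'I_j.+1 => Q k * (u ^+ k) j)); last by move=> k _; rewrite fexpnE.
  apply: (@sum_widen _ (fun m => Q m * (u ^+ m) j) j.+1 K).
    by rewrite -(prednK hK) ltnS.
  by move=> m hm _; rewrite exp_val ?mulr0.
rewrite mulr_sumr fcoef_sum.
have key : forall m : 'I_K, ((w^-1 ^+ K * fD u) * (fps_const (Q m) * u ^+ m)) K.-1
   = Q m * (m == K.-1 :> nat)%:R.
  move=> [m hm] /=.
  have -> : (w^-1 ^+ K * fD u) * (fps_const (Q m) * u ^+ m)
     = fps_const (Q m) * (X ^+ m * (w^-1 ^+ (K - m) * fD u)).
    rewrite /u exprMn.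
    have -> : w^-1 ^+ K = w^-1 ^+ (K - m) * w^-1 ^+ m by rewrite -exprD subnK // ltnW.
    have : w^-1 ^+ m * w ^+ m = 1 by rewrite -exprMn mulVr // expr1n.
    move=> E; rewrite -[RHS]mulr1 -E; ring.
  rewrite fcoefCM; congr (_ * _).
  have -> : K.-1 = ((K - m).-1 + m)%N by lia.
  rewrite fXnM cov_term //; last by lia.
  by congr (_ %:R); apply/eqP/eqP; lia.
rewrite (eq_bigr _ (fun m _ => key m)).
rewrite -(prednK hK) big_ord_recr /= eqxx mulr1 big1 ?add0r // => [[m hm]] _ /=.
by rewrite (_ : (m == K.-1) = false) ?mulr0 //; apply/eqP; lia.
Qed.

Lemma lagrange (u psi : F) n k : u 0%N = 0 -> psi 0%N != 0 ->
  fps_comp (X * psi) u = X -> (1 <= k)%N -> (k <= n)%N ->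
  n%:R * (u ^+ k) n = k%:R * ((psi^-1) ^+ n) (n - k)%N.
Proof.
move=> u0 p0 hinv hk hkn.
set w := fps_divX u.
have uw : u = X * w by rewrite mulX_divX.
have H1 : w * fps_comp psi u = 1.
  apply: X_inj; rewrite mulr1 mulrA -uw -[RHS]hinv compM // compX //.
have w0 : w 0%N != 0.
  apply/eqP => w0; have := congr1 (fun f : F => f 0%N) H1.
  by rewrite coefM0 w0 mul0r fcoef1 => /eqP; rewrite eq_sym oner_eq0.
have wu : w \is a GRing.unit by [].
have H2 : fps_comp (psi^-1) u = w.
  rewrite compV // ; apply/esym/inv_uniq => //; by rewrite unitE comp_coef0.
have H3 : fps_comp (psi^-1 ^+ n) u = w ^+ n by rewrite compXn // H2.
have E1 : (fD (u ^+ k)) n.-1 = (u ^+ k) n *+ n.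
  by rewrite /fD prednK //; lia.
have n0 : (0 < n)%N by apply: leq_trans hkn.
rewrite mulr_natl -E1.
clear E1; case: k hk hkn => [|k'] // _ hkn.
rewrite fD_exp -mulrA fcoefCM; congr (_ * _).
have -> : n.-1 = ((n - k'.+1) + k')%N by lia.
rewrite {1}uw exprMn -mulrA fXnM.
have -> : w ^+ k' = w^-1 ^+ (n - k') * w ^+ n.
  have -> : w ^+ n = w ^+ (n - k') * w ^+ k' by rewrite -exprD subnK // ltnW.
  by rewrite mulrA -exprMn mulVr // expr1n mul1r.
rewrite -H3 uw -uw.
have -> : (n - k'.+1)%N = (n - k').-1 by lia.
rewrite uw; apply: cov => //; lia.
Qed.

End Lag.


Section Aux.
Variable R : numFieldType.
Local Notation F := (fps R).
Local Notation X := (@fps_X R).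

Lemma binR m k : (k <= m)%N -> 'C(m, k)%:R = m`!%:R / (k`!%:R * (m - k)`!%:R) :> R.
Proof.
move=> hk; rewrite -(bin_fact hk) !natrM mulfK //.
by rewrite mulf_neq0 // fact_neq0.
Qed.

Lemma expS_add u v : fps_expS u * fps_expS v = fps_expS (u + v) :> F.
Proof.
apply: functional_extensionality => m; rewrite fcoefM /fps_expS addrC exprDn mulr_suml.
apply: eq_bigr => [[i hi]] _ /=; rewrite ltnS in hi.
rewrite -[_ *+ 'C(m, i)]mulr_natr (binR hi).
have h1 := fact_neq0 R i; have h2 := fact_neq0 R (m - i); have h3 := fact_neq0 R m.
field; by rewrite h1 h2 h3.
Qed.

Lemma expS0 : fps_expS 0 = 1 :> F.
Proof.
apply: functional_extensionality => [[|m]]; rewrite /fps_expS fcoef1 /=.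
  by rewrite expr0 fact0 divr1.
by rewrite expr0n /= mul0r.
Qed.

Lemma expS_inv u : (fps_expS u)^-1 = fps_expS (- u) :> F.
Proof.
apply/esym/inv_uniq; last by rewrite unitE expS_coef0 oner_eq0.
by rewrite expS_add addNr expS0.
Qed.

Lemma expS_exp u k : fps_expS u ^+ k = fps_expS (k%:R * u) :> F.
Proof.
elim: k => [|k IH]; first by rewrite expr0 mul0r expS0.
by rewrite exprS IH expS_add mulrSr mulrDl mul1r addrC.
Qed.

Lemma comp_expS y (u : F) : fps_exp (fps_scale y u) = fps_comp (fps_expS y) u.
Proof.
apply: functional_extensionality => n; rewrite /fps_exp /fps_comp.
apply: eq_bigr => k _; rewrite !fexpnE scaleE exprMn -constX fcoefCM /fps_expS expr1n.
by rewrite mul1r; ring.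
Qed.

Lemma fXn_coef k i : (X ^+ k) i = (i == k)%:R.
Proof.
have [hik|hki] := ltnP i k.
  by rewrite -[X ^+ k]mulr1 fXnM_low // (_ : (i == k) = false) //; apply/eqP; lia.
rewrite -(subnK hki) -[X ^+ k]mulr1 fXnM fcoef1.
by case: (i - k)%N => [|m] /=; rewrite ?eqxx // (_ : (m.+1 + k == k) = false) //; apply/eqP; lia.
Qed.

Lemma compfX (f : F) : fps_comp f X = f.
Proof.
apply: functional_extensionality => n; rewrite /fps_comp.
rewrite (bigD1 ord_max) //= big1 ?addr0 => [|[k hk] hne]; rewrite fexpnE fXn_coef.
  by rewrite eqxx mulr1.
rewrite (_ : (n == k) = false) ?mulr0 //.
by apply: (contraNF _ hne) => /eqP e; apply/eqP/val_inj => /=; rewrite e.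
Qed.

Definition sv (c : R) (f : F) : F := fun i => c ^+ i * f i.

Lemma svM c (f g : F) : sv c (f * g) = sv c f * sv c g.
Proof.
apply: functional_extensionality => m; rewrite /sv !fcoefM mulr_sumr.
apply: eq_bigr => [[i hi]] _ /=; rewrite ltnS in hi.
rewrite -{1}(subnKC hi) exprD; ring.
Qed.

Lemma sv1 c : sv c 1 = 1.
Proof. apply: functional_extensionality => [[|m]]; by rewrite /sv fcoef1 /= ?expr0 ?mulr1 ?mulr0. Qed.

Lemma svX c (f : F) k : sv c (f ^+ k) = (sv c f) ^+ k.
Proof. elim: k => [|k IH]; first by rewrite !expr0 sv1. by rewrite !exprS svM IH. Qed.

Lemma sv_expS c : sv c (fps_expS 1 - 1) = fps_expS c - 1.
Proof.
apply: functional_extensionality => m; rewrite /sv !fcoefB !fcoef1 /fps_expS expr1n.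
by case: m => [|m] /=; rewrite ?expr0 ?mulr1 ?subr0 ?mul1r // mulrA mulr1.
Qed.

End Aux.


Section Fin.
Variable R : numFieldType.

Lemma final_pt (l j r : nat) (p s cc b' : R) :
 ((l+j+r).+1)`!%:R * (p * ((r.+1)%:R / ((l+j+r).+1)%:R * (cc^+(l+(l+j+r).+1)
     * (((l+j+r).+1)`!%:R/(l+(l+j+r).+1)`!%:R * s) * (b'^+j / j`!%:R))))
 = 'C((l+j+r).+1.-1,l)%:R / 'C(l+(l+j+r).+1,l)%:R * 'C((l+j+r).+1.-1 - l, j)%:R
   * s * cc^+(l+(l+j+r).+1) * b'^+j * ((r.+1)`!%:R * p).
Proof.
rewrite /= (binR R (_ : l <= l + j + r)%N); last by lia.
rewrite (binR R (_ : l <= l + (l + j + r).+1)%N); last by lia.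
rewrite (binR R (_ : j <= l + j + r - l)%N); last by lia.
have -> : (l + j + r - l = j + r)%N by lia.
have -> : (l + (l + j + r).+1 - l = (l + j + r).+1)%N by lia.
have -> : (j + r - j = r)%N by lia.
rewrite !factS !natrM.
have h1 := fact_neq0 R l; have h2 := fact_neq0 R j; have h3 := fact_neq0 R r.
have h4 := fact_neq0 R (l + j + r); have h5 := fact_neq0 R (j + r).
have h6 := fact_neq0 R (l + (l + j + r).+1).
have h7 : ((l + j + r).+1)%:R != 0 :> R by rewrite pnatr_eq0.
have h8 : (r.+1)%:R != 0 :> R by rewrite pnatr_eq0.
have h9 : 1 + (l%:R + j%:R + r%:R) != 0 :> R by rewrite addrC -!natrD natr1 pnatr_eq0.
field; by rewrite h1 h2 h3 h4 h5 h6 h9.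
Qed.

Lemma tri_swap n (G : nat -> nat -> R) :
 \sum_(i < n) \sum_(j < n - i) G i j = \sum_(j < n) \sum_(i < n - j) G i j.
Proof.
have E1 : forall i : 'I_n, \sum_(j < n - i) G i j
   = \sum_(j < n) (if (i + j < n)%N then G i j else 0).
  move=> [i hi] /=.
  rewrite (eq_bigr (fun j : 'I_(n - i) => if (i + j < n)%N then G i j else 0)); last first.
    by move=> [j hj] _ /=; rewrite (_ : (i + j < n)%N = true) //; lia.
  apply: (@sum_widen _ (fun j => if (i + j < n)%N then G i j else 0)); first by lia.
  by move=> k hk _; rewrite (_ : (i + k < n)%N = false) //; lia.
have E2 : forall j : 'I_n, \sum_(i < n - j) G i j
   = \sum_(i < n) (if (i + j < n)%N then G i j else 0).
  move=> [j hj] /=.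
  rewrite (eq_bigr (fun i : 'I_(n - j) => if (i + j < n)%N then G i j else 0)); last first.
    by move=> [i hi] _ /=; rewrite (_ : (i + j < n)%N = true) //; lia.
  apply: (@sum_widen _ (fun i => if (i + j < n)%N then G i j else 0)); first by lia.
  by move=> k hk _; rewrite (_ : (k + j < n)%N = false) //; lia.
rewrite (eq_bigr _ (fun i _ => E1 i)) (eq_bigr _ (fun j _ => E2 j)).
exact: exchange_big.
Qed.

End Fin.

Theorem theorem3 (R : numFieldType) (a b c : R) (S : nat -> {poly R}) :
  c != 0 ->
  is_sheffer (fps_pow (fps_eT R) a)
    (fps_mulX (fps_mul (fps_expS b)
       (fps_inv (fps_divX (fps_sub (fps_expS c) (fps_const 1)))))) S ->
  forall (n : nat) (x : R), (1 <= n)%N ->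
  (S n).[x] =
    \sum_(l < n) \sum_(j < n - l)
      ('C(n.-1, l)%:R / 'C(l + n, l)%:R * 'C(n.-1 - l, j)%:R
       * stirling2 R (l + n) n * c ^+ (n + l) * (- (n%:R * b)) ^+ j
       * bernoulli_ord a x (n - l - j)).
Proof.
move=> c0 [fb [fb0 [hinv hS]]] n x hn.
set X := @fps_X R.
set Dc : fps R := fps_divX (fps_sub (fps_expS c) (fps_const 1)).
have Dc0 : Dc 0%N = c.
  change (fps_expS c 1 - 0 = c); by rewrite subr0 /fps_expS expr1 divr1.
have Dcu : Dc 0%N != 0 by rewrite Dc0.
set psi := fps_expS b * Dc^-1.
have fE : fps_mulX (fps_mul (fps_expS b) (fps_inv Dc)) = X * psi.
  by rewrite fXM mulE invE.
have hinv' : fps_comp (X * psi) fb = X.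
  by rewrite -fE; apply: functional_extensionality.
have psi0 : psi 0%N != 0.
  by rewrite /psi coefM0 expS_coef0 mul1r coefV0 // Dc0 invr_eq0.
have Lg := lagrange fb0 psi0 hinv'.
have psiV : psi^-1 = Dc * fps_expS (- b).
  have ub : fps_expS b \is a GRing.unit by rewrite unitE expS_coef0 oner_eq0.
  have ud : Dc^-1 \is a GRing.unit by rewrite unitrV.
  by rewrite /psi (invrM ub ud) invrK expS_inv.
have psin : psi^-1 ^+ n = Dc ^+ n * fps_expS (- (n%:R * b)).
  by rewrite psiV exprMn expS_exp mulrN.
have n0 : n%:R != 0 :> R by rewrite pnatr_eq0 -lt0n.
have Dcn : forall l, (Dc ^+ n) l = c ^+ (l + n) * (n`!%:R / (l + n)`!%:R * stirling2 R (l + n) n).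
  move=> l.
  have Ec : X * Dc = sv c (fps_expS 1 - 1).
    rewrite sv_expS /Dc subE oneE mulX_divX //.
    by rewrite fcoefB expS_coef0 fcoef1 subrr.
  have := congr1 (fun f : fps R => (f ^+ n) (l + n)%N) Ec.
  rewrite /= exprMn fXnM -svX /sv => ->; congr (_ * _).
  rewrite /stirling2 fexpnE subE oneE.
  have h1 := fact_neq0 R n; have h2 := fact_neq0 R (l + n).
  field; by rewrite h1 h2.
have eT0 : fps_eT R 0%N = 1.
  change (fps_expS 1 1 - 0 = 1 :> R); by rewrite subr0 /fps_expS expr1n divr1.
set P := fps_pow (fps_eT R)^-1 a * fps_expS x.
have hB : forall k, bernoulli_ord a x k = k`!%:R * P k.
  by move=> k; rewrite /bernoulli_ord invE ?eT0 ?oner_eq0 // comp_expS compfX.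
have G0 : fps_pow (fps_eT R) a 0%N != 0 by rewrite pow_coef0 oner_eq0.
have hSx : (S n).[x] = n`!%:R * fps_comp P fb n.
  have := hS x n; rewrite invE; last by rewrite comp_coef0.
  rewrite -compV // comp_expS -(powV a eT0) mulE -compM // -/P => H.
  by rewrite -H mulrC divfK // fact_neq0.
pose Gt k l := n`!%:R * (P k.+1 * ((k.+1)%:R / n%:R * (c ^+ (l + n)
      * (n`!%:R / (l + n)`!%:R * stirling2 R (l + n) n)
      * ((- (n%:R * b)) ^+ (n - k.+1 - l) / (n - k.+1 - l)`!%:R)))).
have L1 : (S n).[x] = \sum_(k < n) \sum_(l < n - k) Gt k l.
  rewrite hSx /fps_comp big_ord_recl.
  rewrite (_ : fps_expn fb (@ord0 n) n = 0); last first.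
    by rewrite fexpnE expr0 fcoef1 (_ : (n == 0)%N = false) //; apply/eqP; lia.
  rewrite mulr0 add0r mulr_sumr; apply: eq_bigr => [[k hk]] _; rewrite fexpnE.
  have -> : (lift ord0 (Ordinal hk) : nat) = k.+1 by [].
  have -> : (fb ^+ k.+1) n = (k.+1)%:R / n%:R * (psi^-1 ^+ n) (n - k.+1)%N.
    by apply: (mulfI n0); rewrite Lg //; field; rewrite n0.
  rewrite psin fcoefM.
  have -> : (n - k.+1).+1 = (n - k)%N by lia.
  rewrite !mulr_sumr; apply: eq_bigr => [[l hl]] _ /=.
  by rewrite Dcn /fps_expS.
rewrite L1 tri_swap; apply: eq_bigr => [[l hl]] _ /=.
rewrite -(big_mkord xpredT (fun k => Gt k l)) big_rev_mkord subn0.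
apply: eq_bigr => [[j hj]] _ /=.
rewrite hB /Gt.
have [r hr] : exists r, n = (l + j + r).+1 by exists (n - l - j.+1)%N; lia.
have e1 : (n - l - j.+1 = r)%N by lia.
have e2 : (n - r.+1 - l = j)%N by lia.
have e3 : (n - l - j = r.+1)%N by lia.
rewrite e1 e2 e3 (addnC n l).
clear -hr; subst n.
exact: final_pt.
Qed.
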